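(* Let $t\le 1/2$ be a positive rational number and let $G$ be a minimally $t$-tough split graph whose vertex set is partitioned into a clique $C$ and an independent set $I$. Then there exists a positive integer $b$ such that $t=1/b$ and $|C|\le 3$. Moreover, either (1) $G$ is a tree with at most two internal (non-leaf) vertices and with maximum degree $\Delta(G)=b$, or (2) $|C|=3$, every vertex in $I$ has degree $1$, and every vertex in $C$ has degree $b+1$.
   Context: All graphs are finite, simple and undirected. A graph is split if its vertex set can be partitioned into a clique and an independent set. $\omega(H)$ denotes the number of components of $H$. A cutset of $G$ is a vertex set $S$ with $G-S$ disconnected. For positive real $t$, $G$ is $t$-tough if $\omega(G-S)\le |S|/t$ for every cutset $S$; the toughness $\tau(G)$ is the largest such $t$, with $\tau(K_n)=\infty$ for all $n\ge1$. $G$ is minimally $t$-tough if $\tau(G)=t$ and $\tau(G-e)<t$ for every edge $e$ of $G$. *)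

(* Defs.v *)
(* A finite simple graph is a finType T with a symmetric,
   irreflexive boolean adjacency relation e : rel T. *)
From mathcomp Require Import all_boot all_order all_algebra.
Set Implicit Arguments. Unset Strict Implicit. Unset Printing Implicit Defensive.
Import Order.TTheory GRing.Theory Num.Theory.

Section Graphs.
Variable T : finType.

Definition simple_graph (e : rel T) : Prop := symmetric e /\ irreflexive e.

Definition del_edge (e : rel T) (u v : T) : rel T :=
  fun x y => e x y && ~~ (((x == u) && (y == v)) || ((x == v) && (y == u))).

Definition del_vertices (e : rel T) (S : {set T}) : rel T :=
  fun x y => [&& e x y, x \notin S & y \notin S].

Definition n_components (e : rel T) (S : {set T}) : nat :=
  #|[set [set y in ~: S | connect (del_vertices e S) x y] | x in ~: S]|.

Definition cutset (e : rel T) (S : {set T}) : Prop :=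
  (1 < n_components e S)%N.

Definition tough (e : rel T) (t : rat) : Prop :=
  forall S : {set T}, cutset e S ->
    ((n_components e S)%:R <= (#|S|)%:R / t)%R.

(* tau(G) = t : t is the largest value for which G is t-tough
   (so tau(K_n) = infinity is never equal to a rational t) *)
Definition toughness_eq (e : rel T) (t : rat) : Prop :=
  tough e t /\ forall t' : rat, (t < t')%R -> ~ tough e t'.

(* tau(G) < t, for t > 0: since tau is the largest toughness value,
   this means G is not t-tough. *)
Definition toughness_lt (e : rel T) (t : rat) : Prop := ~ tough e t.

Definition minimally_tough (e : rel T) (t : rat) : Prop :=
  toughness_eq e t /\
  forall u v : T, e u v -> toughness_lt (del_edge e u v) t.

Definition is_clique (e : rel T) (C : {set T}) : Prop :=
  forall x y, x \in C -> y \in C -> x != y -> e x y.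

Definition is_independent (e : rel T) (I : {set T}) : Prop :=
  forall x y, x \in I -> y \in I -> ~~ e x y.

Definition split_partition (e : rel T) (C I : {set T}) : Prop :=
  [/\ C :&: I = set0, C :|: I = [set: T], is_clique e C & is_independent e I].

Definition deg (e : rel T) (x : T) : nat := #|[set y | e x y]|.

Definition max_deg (e : rel T) : nat := \max_(x : T) deg e x.

Definition connected (e : rel T) : Prop := forall x y, connect e x y.

Definition acyclic (e : rel T) : Prop :=
  forall s : seq T, uniq s -> (2 < size s)%N -> ~~ cycle e s.

Definition is_tree (e : rel T) : Prop :=
  (0 < #|T|)%N /\ connected e /\ acyclic e.

Definition internal_vertices (e : rel T) : {set T} :=
  [set x | (1 < deg e x)%N].

End Graphs.

(* Main.v *)
Require Import Defs.
From mathcomp Require Import all_boot all_order all_algebra.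
From mathcomp Require Import lra zify.
Import Order.TTheory GRing.Theory Num.Theory.
Set Implicit Arguments. Unset Strict Implicit. Unset Printing Implicit Defensive.

Lemma dv_sym (T : finType) (r : rel T) (S : {set T}) :
  symmetric r -> symmetric (del_vertices r S).
Proof. by move=> hs x y; rewrite /del_vertices hs; case: (x \in S); case: (y \in S); rewrite ?andbF. Qed.

Lemma de_sym (T : finType) (r : rel T) (x y : T) :
  symmetric r -> symmetric (del_edge r x y).
Proof.
move=> hs a b; rewrite /del_edge hs.
by case: (a == x); case: (a == y); case: (b == x); case: (b == y).
Qed.

Definition comp (T : finType) (r : rel T) (S : {set T}) (x : T) :=
  [set y in ~: S | connect (del_vertices r S) x y].

Lemma ncomp_ub (T : finType) (r : rel T) (S R : {set T}) :
  symmetric r ->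
  (forall a, a \notin S -> exists2 z, z \in R & connect (del_vertices r S) a z) ->
  (n_components r S <= #|R|)%N.
Proof.
move=> hs hR; rewrite /n_components.
have H := leq_imset_card (comp r S) R. apply: leq_trans H.
apply: subset_leq_card; apply/subsetP => X /imsetP [a]; rewrite inE => aS ->.
have [z zR az] := hR a aS.
apply/imsetP; exists z => //; apply/setP => y; rewrite !inE.
have hsym := sym_connect_sym (dv_sym S hs).
case: (y \in S) => //=.
apply/idP/idP => h.
- by apply: connect_trans h; rewrite hsym.
- exact: connect_trans az h.
Qed.

Lemma ncomp_lb (T : finType) (r : rel T) (S R : {set T}) :
  R \subset ~: S ->
  (forall a b, a \in R -> b \in R -> a != b -> ~~ connect (del_vertices r S) a b) ->
  (#|R| <= n_components r S)%N.
Proof.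
move=> RS hR; rewrite /n_components.
have -> : #|R| = #|comp r S @: R|.
  rewrite card_in_imset // => a b aR bR heq.
  apply/eqP; apply: contraT => ab.
  have : b \in comp r S b by rewrite inE connect0 andbT; exact: (subsetP RS).
  by rewrite -heq inE (negPf (hR _ _ aR bR ab)) andbF.
exact/subset_leq_card/imsetS.
Qed.

Lemma iso_connect (T : finType) (r : rel T) (a b : T) :
  (forall c, ~~ r a c) -> connect r a b -> a = b.
Proof.
move=> ha /connectP [[|c p] /= pth ->] //.
by move: pth; rewrite (negPf (ha c)).
Qed.

Lemma iso_dv (T : finType) (r : rel T) (S : {set T}) (w : T) :
  [set z | r w z] \subset S -> forall c, ~~ del_vertices r S w c.
Proof.
move=> hw c; rewrite /del_vertices; apply/negP => /and3P [h _ cS].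
by move: cS; rewrite (subsetP hw) // inE.
Qed.

Lemma ncomp_eq_de (T : finType) (e : rel T) (S : {set T}) (x y : T) :
  symmetric e ->
  (x \in S) || (y \in S) || connect (del_vertices (del_edge e x y) S) x y ->
  n_components (del_edge e x y) S = n_components e S.
Proof.
move=> hs hxy.
have hsym := sym_connect_sym (dv_sym S (de_sym x y hs)).
have E : connect (del_vertices (del_edge e x y) S) =2 connect (del_vertices e S).
  move=> a b; apply/idP/idP; apply: connect_sub => {a b} a b.
  - move=> h; apply: connect1; move: h; rewrite /del_vertices /del_edge.
    by case/and3P => /andP [-> _] -> ->.
  - rewrite /del_vertices /del_edge => /and3P [h aS bS].
    case E : ((a == x) && (b == y) || (a == y) && (b == x)); last first.
      by apply: connect1; rewrite h E aS bS.
    move: hxy; case/orP: E => /andP [/eqP -> /eqP ->] in aS bS *.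
    + by rewrite (negPf aS) (negPf bS).
    + by rewrite (negPf aS) (negPf bS) /= hsym.
rewrite /n_components; apply: eq_card => X.
by apply/imsetP/imsetP => [][a aS ->]; exists a => //; apply/setP => b; rewrite !inE E.
Qed.

Definition nbr (T : finType) (e : rel T) (w : T) := [set z | e w z].
Definition Kset (T : finType) (e : rel T) (I S : {set T}) :=
  [set w in I | (w \notin S) && (nbr e w \subset S)].

Lemma sp_or (T : finType) (e : rel T) (C I : {set T}) x :
  split_partition e C I -> (x \in C) || (x \in I).
Proof. by case=> _ hU _ _; rewrite -in_setU hU inE. Qed.

Lemma sp_CnI (T : finType) (e : rel T) (C I : {set T}) x :
  split_partition e C I -> x \in C -> x \in I -> False.
Proof.
case=> h0 _ _ _ xC xI; have : x \in C :&: I by rewrite inE xC xI.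
by rewrite h0 inE.
Qed.

Lemma sp_nbrC (T : finType) (e : rel T) (C I : {set T}) w z :
  split_partition e C I -> w \in I -> e w z -> z \in C.
Proof.
move=> sp wI ewz; case/orP: (sp_or z sp) => // zI.
by case: sp => _ _ _ hI; move: (hI _ _ wI zI); rewrite ewz.
Qed.

Lemma ubG (T : finType) (e : rel T) (C I S : {set T}) :
  simple_graph e -> split_partition e C I ->
  (n_components e S <= (~~ (C \subset S)) + #|Kset e I S|)%N.
Proof.
move=> [hs hirr] sp.
have KS : forall a, a \notin S -> a \in I -> nbr e a \subset S -> a \in Kset e I S.
  by move=> a aS aI hn; rewrite inE aI aS hn.
case: (boolP (C \subset S)) => CS /=.
- apply: ncomp_ub => // a aS; exists a; last exact: connect0.
  case/orP: (sp_or a sp) => aI; first by move: aS; rewrite (subsetP CS).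
  apply: KS => //; apply/subsetP => z; rewrite inE => ez.
  exact: (subsetP CS) (sp_nbrC sp aI ez).
- case/subsetPn: CS => c0 c0C c0S.
  apply: (@leq_trans #|c0 |: Kset e I S|); last by rewrite cardsU1 leq_add2r leq_b1.
  apply: ncomp_ub => // a aS.
  have hc : forall a, a \in C -> a \notin S -> connect (del_vertices e S) a c0.
    move=> b bC bS; case: (eqVneq b c0) => [->|bc]; first exact: connect0.
    apply: connect1; rewrite /del_vertices bS c0S !andbT; case: sp => _ _ hC _.
    exact: hC bC c0C bc.
  case/orP: (sp_or a sp) => aI; first by exists c0; rewrite ?setU11 ?hc.
  case: (boolP (nbr e a \subset S)) => hn.
    by exists a; [rewrite setU1r // KS | exact: connect0].
  case/subsetPn: hn => z; rewrite inE => ez zS.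
  exists c0; first by rewrite setU11.
  apply: (@connect_trans _ _ z); first by apply: connect1; rewrite /del_vertices ez aS zS.
  by apply: hc => //; exact: sp_nbrC sp aI ez.
Qed.

Lemma TL (T : finType) (e : rel T) (t : rat) (S R : {set T}) :
  tough e t -> (0 < t)%R -> R \subset ~: S ->
  (forall a b, a \in R -> b \in R -> a != b -> ~~ connect (del_vertices e S) a b) ->
  (2 <= #|R|)%N -> (t * (#|R|)%:R <= (#|S|)%:R)%R.
Proof.
move=> ht t0 RS hR R2.
have lb := ncomp_lb RS hR.
have := ht S (leq_trans R2 lb); rewrite ler_pdivlMr // => h.
apply: le_trans h; rewrite mulrC; apply: ler_wpM2r; [exact: ltW | by rewrite ler_nat].
Qed.

Lemma iso_pairs (T : finType) (e : rel T) (S K : {set T}) (z : T) :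
  symmetric e ->
  (forall w, w \in K -> nbr e w \subset S) ->
  forall a b, a \in z |: K -> b \in z |: K -> a != b ->
    ~~ connect (del_vertices e S) a b.
Proof.
move=> hs hK a b aR bR ab; apply/negP => hab.
have hsym := sym_connect_sym (dv_sym S hs).
case: (boolP (a \in K)) => aK.
  by move: ab; rewrite (iso_connect (iso_dv (hK _ aK)) hab) eqxx.
case: (boolP (b \in K)) => bK.
  by move: ab; rewrite hsym in hab; rewrite (iso_connect (iso_dv (hK _ bK)) hab) eqxx.
move: aR bR; rewrite !in_setU1 (negPf aK) (negPf bK) !orbF => /eqP ha /eqP hb.
by move: ab; rewrite ha hb eqxx.
Qed.

Lemma witC (T : finType) (e : rel T) (t : rat) (C I : {set T}) (x y : T) :
  simple_graph e -> split_partition e C I -> minimally_tough e t -> (0 < t)%R ->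
  x \in C -> y \in C -> x != y ->
  exists S : {set T},
    [/\ x \notin S, y \notin S,
        (forall z, z \in C -> z != x -> z != y -> z \in S),
        (forall w, e w x -> e w y -> w \in S) &
        ((#|S|)%:R < t * (2 + #|Kset e I S|)%:R)%R].
Proof.
move=> [hs hirr] sp [[ht _] hmin] t0 xC yC xy.
have hcl : is_clique e C by case: sp.
have exy : e x y := hcl _ _ xC yC xy.
have := hmin _ _ exy; rewrite /toughness_lt /tough => hnt.
case: (boolP [exists S : {set T}, (1 < n_components (del_edge e x y) S)%N &&
   ~~ ((n_components (del_edge e x y) S)%:R <= (#|S|)%:R / t)%R]); last first.
  move/existsPn => hS; exfalso; apply: hnt => S hc.
  by move: (hS S); rewrite negb_and hc /= negbK.
case/existsP => S /andP [hc hlt].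
have hnc : ~~ [|| x \in S, y \in S | connect (del_vertices (del_edge e x y) S) x y].
  apply/negP => h.
  have E : n_components (del_edge e x y) S = n_components e S.
    by apply: ncomp_eq_de => //; rewrite -orbA.
  rewrite E in hc hlt.
  by rewrite (ht S hc) in hlt.
move: hnc; rewrite !negb_or => /and3P [xS yS nconn].
have hdv : forall a b, a \notin S -> b \notin S -> e a b ->
    ~~ (((a == x) && (b == y)) || ((a == y) && (b == x))) ->
    connect (del_vertices (del_edge e x y) S) a b.
  by move=> a b aS bS eab hn; apply: connect1; rewrite /del_vertices /del_edge eab hn aS bS.
have W2 : forall z, z \in C -> z != x -> z != y -> z \in S.
  move=> z zC zx zy; apply: contraT => zS; rewrite -(negPf nconn).
  apply: (@connect_trans _ _ z).
    apply: hdv => //; first by apply: hcl => //; rewrite eq_sym.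
    by rewrite (negPf zy) (negPf xy) andbF.
  apply: hdv => //; first exact: hcl.
  by rewrite (negPf zx) (negPf zy).
have W3 : forall w, e w x -> e w y -> w \in S.
  move=> w ewx ewy; apply: contraT => wS; rewrite -(negPf nconn).
  have wx : w != x by apply: contraTneq ewx => ->; rewrite hirr.
  have wy : w != y by apply: contraTneq ewy => ->; rewrite hirr.
  apply: (@connect_trans _ _ w).
    apply: hdv => //; first by rewrite hs.
    by rewrite (negPf wy) (negPf xy) andbF.
  by apply: hdv => //; rewrite (negPf wx) (negPf wy).
exists S; split => //.
have ub : (n_components (del_edge e x y) S <= 2 + #|Kset e I S|)%N.
  apply: (@leq_trans #|[set x; y] :|: Kset e I S|); last first.
    rewrite cardsU; apply: leq_trans (leq_subr _ _) _.
    by rewrite leq_add2r cards2; case: (x != y).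
  apply: ncomp_ub; first exact: de_sym.
  move=> a aS; case/orP: (sp_or a sp) => aC.
    case: (eqVneq a x) => [->|ax]; first by exists x; rewrite ?inE ?eqxx ?connect0.
    case: (eqVneq a y) => [->|ay]; first by exists y; rewrite ?inE ?eqxx ?orbT ?connect0.
    by move: aS; rewrite W2.
  case: (boolP (nbr e a \subset S)) => hn.
    by exists a; rewrite ?connect0 // !inE aC aS hn !orbT.
  case/subsetPn: hn => z; rewrite inE => ez zS.
  have zC := sp_nbrC sp aC ez.
  have ax : a != x by apply: contraTneq aC => ->; apply/negP => h; exact: sp_CnI sp xC h.
  have ay : a != y by apply: contraTneq aC => ->; apply/negP => h; exact: sp_CnI sp yC h.
  case: (eqVneq z x) => [zx|zx].
    exists z; first by rewrite zx !inE eqxx.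
    by apply: hdv => //; rewrite (negPf ax) (negPf ay).
  case: (eqVneq z y) => [zy|zy]; last by move: zS; rewrite W2.
  exists z; first by rewrite zy !inE eqxx orbT.
  by apply: hdv => //; rewrite (negPf ax) (negPf ay).
move: hlt; rewrite -ltNge ltr_pdivrMr // => h.
apply: (lt_le_trans h); rewrite mulrC; apply: ler_wpM2l; [exact: ltW | by rewrite ler_nat].
Qed.

Lemma pendant (T : finType) (e : rel T) (t : rat) (C I : {set T}) (w u1 u2 : T) :
  simple_graph e -> split_partition e C I -> minimally_tough e t -> (0 < t)%R ->
  (t <= 1 / 2%:R)%R -> w \in I -> e w u1 -> e w u2 -> u1 = u2.
Proof.
move=> sg sp mt t0 th wI e1 e2; apply/eqP; apply: contraT => u12.
have [hs hirr] := sg.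
have u1C := sp_nbrC sp wI e1; have u2C := sp_nbrC sp wI e2.
have [S [u1S u2S W2 W3 hlt]] := witC sg sp mt t0 u1C u2C u12.
have wS := W3 _ e1 e2.
set X := C :\: [set u1; u2].
have XS : X \subset S.
  apply/subsetP => z; rewrite !inE negb_or => /andP [/andP [zu1 zu2] zC].
  exact: W2.
have wX : w \notin X by rewrite !inE; apply/negP => /andP [_ h]; exact: sp_CnI sp h wI.
have hS : (#|X| + 1 <= #|S|)%N.
  have -> : (#|X| + 1 = #|w |: X|)%N by rewrite cardsU1 wX addnC.
  by apply: subset_leq_card; rewrite subUset sub1set wS XS.
have sp' := sp.
set K := Kset e I S in hlt.
have hK : forall k, k \in K -> nbr e k \subset X.
  move=> k; rewrite inE => /andP [kI /andP [_ hn]].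
  apply/subsetP => z zn; have zS := subsetP hn _ zn.
  rewrite inE in zn.
  rewrite !inE (sp_nbrC sp kI zn) andbT.
  by apply/negP => /orP [] /eqP zu; move: zS; rewrite zu ?(negPf u1S) ?(negPf u2S).
have u1K : u1 \notin K by rewrite inE; apply/negP => /andP [h _]; exact: sp_CnI sp u1C h.
case: (posnP #|K|) => K0.
  rewrite K0 addn0 in hlt.
  have : (1 <= #|S|)%N by apply: leq_trans hS; rewrite addn1.
  rewrite -(ler_nat rat) => h1.
  have : (2%:R * t <= 1 :> rat)%R.
    by move: th; rewrite ler_pdivlMr ?ltr0n // mulrC.
  move=> h2; have := lt_le_trans (le_lt_trans h1 hlt); rewrite mulrC => h3.
  by have := h3 _ h2; rewrite ltxx.
have RX : (u1 |: K) \subset ~: X.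
  apply/subsetP => a; rewrite in_setU1 => /orP [/eqP ->|aK]; first by rewrite !inE eqxx.
  have aI : a \in I by move: aK; rewrite inE => /andP [].
  rewrite !inE; apply/negP => /andP [_ aC]; exact: sp_CnI sp aC aI.
have := TL (mt.1.1) t0 RX (iso_pairs hs hK); rewrite cardsU1 u1K /=.
move=> /(_ K0) h1.
move: hS; rewrite -(ler_nat rat) => hS.
move: hlt h1 hS th; rewrite !natrD.
move: (#|K|%:R : rat)%R (#|S|%:R : rat)%R (#|X|%:R : rat)%R => k s xx.
move=> *; nra.
Qed.

Definition pc (T : finType) (I : {set T}) (f : T -> T) (z : T) :=
  #|[set w in I | f w == z]|.

Lemma card_fpre (T : finType) (I X : {set T}) (f : T -> T) :
  #|[set w in I | f w \in X]| = (\sum_(z in X) pc I f z)%N.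
Proof.
rewrite -sum1_card (partition_big f (mem X)); last by move=> i; rewrite inE => /andP [].
apply: eq_bigr => z zX; rewrite sum1_card /pc; apply: eq_card => w.
have zX' : z \in X := zX.
rewrite unfold_in /= !inE; case: (eqVneq (f w) z) => [fz|]; rewrite ?andbF ?andbT //.
by rewrite fz zX' andbT.
Qed.

Lemma card_fpre_le (T : finType) (I C X : {set T}) (f : T -> T) :
  X \subset C ->
  (#|[set w in I | f w \in X]| <= #|X| * \max_(z in C) pc I f z)%N.
Proof.
move=> XC; rewrite card_fpre -sum_nat_const; apply: leq_sum => z zX.
by apply: leq_bigmax_cond; exact: (subsetP XC).
Qed.

Lemma ubP (T : finType) (e : rel T) (C I S : {set T}) (f : T -> T) :
  simple_graph e -> split_partition e C I ->
  (forall w, w \in I -> e w (f w)) ->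
  (n_components e S <= (~~ (C \subset S)) + #|S :&: C| * \max_(z in C) pc I f z)%N.
Proof.
move=> sg sp hf; apply: leq_trans (ubG S sg sp) _; rewrite leq_add2l.
apply: leq_trans (card_fpre_le I f (subsetIr S C)).
apply: subset_leq_card; apply/subsetP => w; rewrite !inE => /andP [wI /andP [_ hn]].
rewrite wI /=; have ef := hf w wI.
by rewrite (sp_nbrC sp wI ef) (subsetP hn) // inE.
Qed.

Theorem mainTheorem6 (T : finType) (e : rel T) (t : rat) (C I : {set T}) :
  simple_graph e ->
  (0 < t)%R -> (t <= 1 / 2%:R)%R ->
  minimally_tough e t ->
  split_partition e C I ->
  exists b : nat,
    [/\ (0 < b)%N, t = (1 / b%:R)%R, (#|C| <= 3)%N &
      ((is_tree e /\ (#|internal_vertices e| <= 2)%N /\ max_deg e = b)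
       \/
       [/\ #|C| = 3,
           (forall v, v \in I -> deg e v = 1) &
           (forall v, v \in C -> deg e v = b.+1)])].
Proof.
move=> sg t0 th mt sp.
have [hs hirr] := sg.
have [[ht hmax] hmin] := mt.
have hcl : is_clique e C by case: sp.
have [S0 hS0] : exists S0 : {set T}, (1 < n_components e S0)%N.
  case: (boolP [exists S : {set T}, (1 < n_components e S)%N]).
    by case/existsP => S hS; exists S.
  move/existsPn => hn; exfalso; apply: (hmax (t + 1)%R); first by rewrite ltrDl ltr01.
  by move=> S hS; move: (hn S); rewrite /cutset in hS; rewrite hS.
have T2 : (2 <= #|T|)%N.
  apply: leq_trans hS0 _; apply: (@leq_trans #|~: S0|); last exact: max_card.
  by apply: ncomp_ub => // a aS; exists a; rewrite ?inE ?connect0.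
have hnb : forall w, w \in I -> exists z, e w z.
  move=> w wI; case: (boolP [exists z, e w z]) => [/existsP //|/existsPn hn].
  exfalso.
  have : (0 < #|[set~ w]|)%N by rewrite cardsC1; move: T2; case: #|T| => [|[|n]].
  case/card_gt0P => z; rewrite !inE => zw.
  have RS : (z |: [set w]) \subset ~: set0 by apply/subsetP => a; rewrite !inE.
  have hK : forall a, a \in [set w] -> nbr e a \subset set0.
    by move=> a; rewrite inE => /eqP ->; apply/subsetP => b; rewrite inE (negPf (hn b)).
  have := TL ht t0 RS (iso_pairs hs hK).
  rewrite cardsU1 cards1 inE zw cards0 /= => /(_ isT) h.
  by move: h; rewrite leNgt mulr_gt0 // ltr0n.
pose f := fun w => odflt w [pick z | e w z].
have hf : forall w, w \in I -> e w (f w).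
  move=> w wI; rewrite /f; case: pickP => [z -> //|hn] /=.
  by have [z ez] := hnb w wI; move: (hn z); rewrite ez.
have hfu : forall w, w \in I -> forall z, e w z -> z = f w.
  by move=> w wI z ez; apply: (pendant sg sp mt t0 th wI ez (hf w wI)).
have hfC : forall w, w \in I -> f w \in C by move=> w wI; exact: sp_nbrC sp wI (hf w wI).
have C0 : (0 < #|C|)%N.
  have : (0 < #|[set: T]|)%N by rewrite cardsT; apply: leq_trans T2.
  case/card_gt0P => a _; apply/card_gt0P.
  by case/orP: (sp_or a sp) => aC; [exists a | exists (f a); exact: hfC].
set c := #|C| in C0 *.
set pmax := \max_(z in C) pc I f z.
have hub := fun S => ubP S sg sp hf.
have mS : forall S : {set T}, (#|S :&: C| <= #|S|)%N by move=> S; apply/subset_leq_card/subsetIl.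
have mC : forall S : {set T}, (#|S :&: C| <= c)%N by move=> S; apply/subset_leq_card/subsetIr.
have hsplit : forall S : {set T}, ~~ (C \subset S) -> (#|S :&: C| + 1 <= c)%N.
  move=> S /subsetPn [z zC zS]; rewrite /c -(cardsID S C) setIC leq_add2l.
  by apply/card_gt0P; exists z; rewrite inE zC zS.
have [pm1 pm2] : (1 <= pmax)%N /\ (c = 1 -> 2 <= pmax)%N.
  have := hub S0; case: (boolP (C \subset S0)) => CS /= h.
    have h2 := leq_trans hS0 h; have h3 := mC S0.
    move: h2 h3; move: (#|S0 :&: C|) => m h2 h3.
    split; first by nia.
    by move=> c1; rewrite c1 in h3; nia.
  have h2 := leq_trans hS0 h; have h3 := hsplit S0 CS.
  move: h2 h3; move: (#|S0 :&: C|) => m h2 h3.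
  by split; nia.
set b := (pmax + (1 < c))%N.
have b0 : (0 < b)%N by rewrite /b; lia.
have htb : tough e (1 / b%:R)%R.
  move=> S hS; rewrite div1r invrK -natrM ler_nat.
  apply: leq_trans (hub S) _; have := hub S.
  case: (boolP (C \subset S)) => CS /= h.
    have := mS S; move: (#|S :&: C|) => m hm.
    by rewrite /b; nia.
  have h2 := leq_trans hS h; have h3 := hsplit S CS; have h4 := mS S.
  move: h2 h3 h4; move: (#|S :&: C|) (#|S|) => m s h2 h3 h4.
  by rewrite /b; nia.
have tge : (1 / b%:R <= t)%R.
  by rewrite leNgt; apply/negP => hlt; exact: hmax _ hlt htb.
have [x0 x0C hx0] := eq_bigmax_cond (pc I f) C0.
rewrite -/pmax in hx0.
set P := [set w in I | f w == x0].
have cP : #|P| = pmax by rewrite hx0.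
have hP : forall w, w \in P -> nbr e w \subset [set x0].
  move=> w; rewrite inE => /andP [wI /eqP fw]; apply/subsetP => z; rewrite !inE => ez.
  by rewrite -fw (hfu w wI z ez).
have x0P : x0 \notin P by rewrite inE; apply/negP => /andP [h _]; exact: sp_CnI sp x0C h.
have tle : (t * b%:R <= 1)%R.
  case: (ltnP 1 c) => c1.
    have : (0 < #|C :\ x0|)%N by move: c1; rewrite /c (cardsD1 x0 C) x0C.
    case/card_gt0P => y; rewrite !inE => /andP [yx0 yC].
    have yP : y \notin P by rewrite inE; apply/negP => /andP [h _]; exact: sp_CnI sp yC h.
    have RS : (y |: P) \subset ~: [set x0].
      apply/subsetP => a; rewrite !inE => /orP [/eqP ->//|/andP [aI _]].
      by apply/negP => /eqP ax; apply: (sp_CnI sp x0C); rewrite -ax.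
    have := TL ht t0 RS (iso_pairs hs hP).
    rewrite cardsU1 yP cards1 cP /b c1 addnC; apply.
    by rewrite addn1 ltnS.
  have c1' : c = 1 by move: C0 c1; case: (c) => [|[|]].
  have : (0 < #|P|)%N by rewrite cP; apply: leq_trans (pm2 c1').
  case/card_gt0P => z zP.
  have RS : (z |: P) \subset ~: [set x0].
    apply/subsetP => a; rewrite !inE => /orP [/eqP ->|]; last first.
      move=> h; apply/negP => /eqP ax; move: x0P; rewrite -ax inE h //.
    by apply/negP => /eqP zx; move: x0P; rewrite -zx zP.
  have := TL ht t0 RS (iso_pairs hs hP).
  rewrite cardsU1 zP cards1 /= cP /b c1' addn0 => /(_ (pm2 c1')); exact.
have tb : t = (1 / b%:R)%R.
  apply/le_anti; rewrite tge andbT ler_pdivlMr // ltr0n //.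
have degI : forall w, w \in I -> deg e w = 1.
  move=> w wI; rewrite /deg (_ : [set y | e w y] = [set f w]) ?cards1 //.
  apply/setP => z; rewrite !inE; apply/idP/eqP => [/(hfu w wI) //|->]; exact: hf.
have degC : forall x, x \in C -> deg e x = (c - 1 + pc I f x)%N.
  move=> x xC; rewrite /deg (_ : [set y | e x y] = (C :\ x) :|: [set w in I | f w == x]).
    rewrite cardsU (_ : (C :\ x) :&: [set w in I | f w == x] = set0) ?cards0 ?subn0.
      by rewrite /c /pc (cardsD1 x C) xC add1n subn1.
    apply/setP => z; rewrite !inE; apply/negP => /andP [/andP [_ zC] /andP [zI _]]; exact: sp_CnI sp zC zI.
  apply/setP => z; rewrite !inE; apply/idP/idP.
    move=> exz; case/orP: (sp_or z sp) => [zC|zI].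
      by rewrite zC andbT; apply/orP; left; apply: contraTneq exz => ->; rewrite hirr.
    by rewrite zI /= -(hfu z zI x) ?eqxx ?orbT // hs.
  case/orP => [/andP [zx zC]|/andP [zI /eqP fz]].
    by apply: hcl => //; rewrite eq_sym.
  by rewrite hs -fz; exact: hf.
have wb : forall x y, x \in C -> y \in C -> x != y -> exists S : {set T},
    [/\ x \notin S, y \notin S,
        (forall z, z \in C -> z != x -> z != y -> z \in S),
        (#|S| * b < 2 + #|Kset e I S|)%N &
        Kset e I S \subset [set w in I | f w \in C :\: [set x; y]]].
  move=> x y xC yC xy; have [S [xS yS W2 _ hlt]] := witC sg sp mt t0 xC yC xy.
  exists S; split => //.
    move: hlt; rewrite tb div1r mulrC ltr_pdivlMr ?ltr0n // -natrM ltr_nat //.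
  apply/subsetP => w; rewrite !inE => /andP [wI /andP [_ hn]].
  rewrite wI hfC //= andbT; have := subsetP hn (f w); rewrite inE hf // => /(_ isT) fS.
  by apply/negP => /orP [] /eqP h; move: fS; rewrite h ?(negPf xS) ?(negPf yS).
have c3 : (c <= 3)%N.
  rewrite leqNgt; apply/negP => c4.
  have [x xC] : exists x, x \in C by apply/card_gt0P.
  have : (0 < #|C :\ x|)%N by move: c4; rewrite /c (cardsD1 x C) xC; case: #|C :\ x|.
  case/card_gt0P => y; rewrite !inE => /andP [yx yC].
  have xy : x != y by rewrite eq_sym.
  have [S [xS yS W2 hlt hK]] := wb x y xC yC xy.
  set X := C :\: [set x; y].
  have XC : X \subset C by apply: subsetDl.
  have dS : (#|X| <= #|S|)%N.
    apply/subset_leq_card/subsetP => z; rewrite !inE negb_or => /andP [/andP [zx zy] zC].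
    exact: W2.
  have dK := leq_trans (subset_leq_card hK) (card_fpre_le I f XC).
  have dc : #|X| = (c - 2)%N.
    rewrite /X cardsD (setIidPr _); first by rewrite cards2 eq_sym yx.
    by apply/subsetP => z; rewrite !inE => /orP [] /eqP ->.
  have b1 : b = (pmax + 1)%N by rewrite /b (leq_trans _ c4).
  rewrite -/pmax b1 dc in hlt dK dS.
  have h1 := leq_mul dS (leqnn (pmax + 1)).
  have h2 := leq_ltn_trans h1 hlt.
  have h3 := leq_trans h2 (leq_add (leqnn 2) dK).
  move: h3; rewrite mulnDr muln1; move: ((c - 2) * pmax)%N => q h3.
  clear -h3 c4; lia.
have b1 : (1 < c)%N -> b = (pmax + 1)%N by move=> h; rewrite /b h.
exists b; split => //.
case: (leqP c 2) => c2; [left | right].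
  have hb : b = (pmax + (c - 1))%N.
    rewrite /b; case: (ltnP 1 c) => h /=; lia.
  split; last split.
  - split; first by apply: leq_trans T2.
    have hx : forall a, connect e a x0.
      have hxC : forall a, a \in C -> connect e a x0.
        move=> a aC; case: (eqVneq a x0) => [->|ax]; first exact: connect0.
        by apply: connect1; apply: hcl.
      move=> a; case/orP: (sp_or a sp) => [aC|aI]; first exact: hxC.
      apply: (@connect_trans _ _ (f a)); first by apply: connect1; exact: hf.
      by apply: hxC; apply: hfC.
    split.
      move=> a a'; apply: (connect_trans (hx a)).
      by rewrite (sym_connect_sym hs); exact: hx.
    move=> s us s2; apply/negP => cyc.
    have [w ws wI] : exists2 w, w \in s & w \in I.
      case: (boolP (all (fun z => z \in C) s)) => hall.
        have : (size s <= c)%N.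
          rewrite -(card_uniqP us); apply: subset_leq_card; apply/subsetP => z zs.
          exact: (allP hall).
        by move=> h; exfalso; move: (leq_trans s2 (leq_trans h c2)).
      case/allPn: hall => z zs zC; exists z => //.
      by case/orP: (sp_or z sp) => //; rewrite (negPf zC).
    have [i s' hrot] := rot_to ws.
    have cyc' : cycle e (w :: s') by rewrite -hrot rot_cycle.
    have us' : uniq (w :: s') by rewrite -hrot rot_uniq.
    have sz : size (w :: s') = size s by rewrite -hrot size_rot.
    case: s' => [|a [|a2 s'']] in hrot cyc' us' sz.
    + by move: s2; rewrite -sz.
    + by move: s2; rewrite -sz.
    move: cyc'; rewrite /= rcons_path => /and3P [ewa _ /andP [_ elw]].
    have h1 := hfu w wI a ewa.
    rewrite hs in elw; have h2 := hfu w wI _ elw.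
    move: us'; rewrite /= !inE negb_or => /andP [_ /andP [ha _]].
    have : a \in a2 :: s'' by rewrite h1 -h2 mem_last.
    by rewrite inE (negPf ha).
  - apply: leq_trans c2; apply: subset_leq_card; apply/subsetP => x; rewrite inE => hx.
    case/orP: (sp_or x sp) => // xI; by move: hx; rewrite degI.
  - have hpc : forall z, z \in C -> (pc I f z <= pmax)%N.
      by move=> z zC; apply: leq_bigmax_cond.
    apply/eqP; rewrite eqn_leq; apply/andP; split.
      apply/bigmax_leqP => x _; case/orP: (sp_or x sp) => [xC|xI].
        by rewrite degC // hb addnC leq_add2r hpc.
      by rewrite degI.
    apply: (leq_trans _ (leq_bigmax_cond _ (isT : predT x0))).
    by rewrite degC // hb -hx0 addnC.
have c3' : c = 3 by apply/eqP; rewrite eqn_leq c3 c2.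
rewrite b1 ?c3' //; split => // v vC.
rewrite degC // c3'.
have hpv : pc I f v = pmax.
  apply/eqP; rewrite eqn_leq leq_bigmax_cond //=.
  have : #|C :\ v| == 2 by move: c3'; rewrite /c (cardsD1 v C) vC add1n => -[->].
  case/cards2P => x [y [xy hCv]].
  have xC : x \in C by move: (setD1K vC); rewrite hCv => <-; rewrite !inE eqxx orbT.
  have yC : y \in C by move: (setD1K vC); rewrite hCv => <-; rewrite !inE eqxx !orbT.
  have xv : x != v.
    have : x \in C :\ v by rewrite hCv !inE eqxx.
    by rewrite !inE => /andP [].
  have yv : y != v.
    have : y \in C :\ v by rewrite hCv !inE eqxx orbT.
    by rewrite !inE => /andP [].
  have [S [xS yS W2 hlt hK]] := wb x y xC yC xy.
  have vS : v \in S by apply: W2; rewrite // eq_sym.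
  have hK' : Kset e I S \subset [set w in I | f w == v].
    apply/subsetP => w /(subsetP hK); rewrite !inE => /andP [wI /andP [hxy fC]].
    rewrite wI /=; apply: contraT => fv.
    have : f w \in C :\ v by rewrite !inE fv fC.
    by rewrite hCv !inE (negPf hxy).
  have dK : (#|Kset e I S| <= pc I f v)%N by apply: subset_leq_card.
  have dS : (1 <= #|S|)%N by apply/card_gt0P; exists v.
  rewrite b1 in hlt; last by rewrite c3'.
  have h1 := leq_mul dS (leqnn (pmax + 1)).
  rewrite mul1n in h1.
  have h2 := leq_ltn_trans h1 hlt.
  have h3 := leq_trans h2 (leq_add (leqnn 2) dK).
  move: h3; move: (pc I f v) => q h3; clear -h3; lia.
by rewrite hpv; lia.
Qed.
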